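(* Let $\langle U,B\rangle$ be a 3-frame and consider the Boolean algebra $2^U$ with the operators $\langle B\rangle(X,Y)=\{u\in U\mid\exists x\in X\,\exists y\in Y\,B(x,u,y)\}$ and $[\![B]\!](X,Y)=\{u\in U\mid\forall x\in X\,\forall y\in Y\,B(x,u,y)\}$. Let $\mathcal U_1,\mathcal U_2,\mathcal U_3$ be principal ultrafilters of $2^U$. Then $Q_{\langle B\rangle}(\mathcal U_1,\mathcal U_2,\mathcal U_3)$ implies $S_{[\![B]\!]}(\mathcal U_1,\mathcal U_2,\mathcal U_3)$. In particular, if $U$ is finite, then $Q_{\langle B\rangle}=S_{[\![B]\!]}$.
   Context: A 3-frame is $\langle U,B\rangle$ with $U$ a non-empty set and $B\subseteq U^3$. For binary operators $f,g$ on $2^U$ and ultrafilters $\mathcal U_1,\mathcal U_2,\mathcal U_3$ of $2^U$: $Q_f(\mathcal U_1,\mathcal U_2,\mathcal U_3)\iff f[\mathcal U_1\times\mathcal U_3]\subseteq\mathcal U_2$ and $S_g(\mathcal U_1,\mathcal U_2,\mathcal U_3)\iff g[\mathcal U_1\times\mathcal U_3]\cap\mathcal U_2\neq\emptyset$. A principal ultrafilter of $2^U$ is one of the form $\{X\subseteq U\mid x\in X\}$ for some $x\in U$. *)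

(* Defs.v *)
From Stdlib Require Import List.

(* Subsets of U (elements of the Boolean algebra 2^U) are predicates U -> Prop. *)

Definition ultrafilter {U : Type} (F : (U -> Prop) -> Prop) : Prop :=
  F (fun _ => True) /\
  ~ F (fun _ => False) /\
  (forall X Y : U -> Prop, F X -> (forall u, X u -> Y u) -> F Y) /\
  (forall X Y : U -> Prop, F X -> F Y -> F (fun u => X u /\ Y u)) /\
  (forall X : U -> Prop, F X \/ F (fun u => ~ X u)).

Definition is_principal {U : Type} (F : (U -> Prop) -> Prop) : Prop :=
  exists x : U, forall X : U -> Prop, F X <-> X x.

Definition diaB {U : Type} (B : U -> U -> U -> Prop) (X Y : U -> Prop) : U -> Prop :=
  fun u => exists x y, X x /\ Y y /\ B x u y.

Definition boxB {U : Type} (B : U -> U -> U -> Prop) (X Y : U -> Prop) : U -> Prop :=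
  fun u => forall x y, X x -> Y y -> B x u y.

Definition Qrel {U : Type} (f : (U -> Prop) -> (U -> Prop) -> (U -> Prop))
  (U1 U2 U3 : (U -> Prop) -> Prop) : Prop :=
  forall X Y, U1 X -> U3 Y -> U2 (f X Y).

Definition Srel {U : Type} (g : (U -> Prop) -> (U -> Prop) -> (U -> Prop))
  (U1 U2 U3 : (U -> Prop) -> Prop) : Prop :=
  exists X Y, U1 X /\ U3 Y /\ U2 (g X Y).

Definition finite_type (U : Type) : Prop := exists l : list U, forall x : U, In x l.

(* Main.v *)
Require Import Defs.
From Stdlib Require Import List Classical.

Lemma princ_equiv (U : Type) (B : U -> U -> U -> Prop) (U1 U2 U3 : (U -> Prop) -> Prop) :
  is_principal U1 -> is_principal U2 -> is_principal U3 ->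
  (Qrel (diaB B) U1 U2 U3 <-> Srel (boxB B) U1 U2 U3).
Proof.
  intros [a Ha] [b Hb] [c Hc]. split.
  - intros HQ.
    assert (Hab : B a b c).
    { assert (H := HQ (fun u => u = a) (fun u => u = c)
        (proj2 (Ha _) eq_refl) (proj2 (Hc _) eq_refl)).
      apply Hb in H. destruct H as [x [y [-> [-> H]]]]. exact H. }
    exists (fun u => u = a), (fun u => u = c).
    split; [apply Ha; reflexivity|]. split; [apply Hc; reflexivity|].
    apply Hb. intros x y -> ->. exact Hab.
  - intros [X [Y [HX [HY HB]]]] X' Y' HX' HY'.
    apply Ha in HX. apply Hc in HY. apply Hb in HB.
    apply Ha in HX'. apply Hc in HY'. apply Hb.
    exists a, c. split; [exact HX'|]. split; [exact HY'|]. apply HB; assumption.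
Qed.

Lemma fin_principal (U : Type) (F : (U -> Prop) -> Prop) :
  finite_type U -> ultrafilter F -> is_principal F.
Proof.
  intros [l Hl] [HT [HF [Hmono [Hint Hcomp]]]].
  assert (Hx : exists x, F (fun u => u = x)).
  { assert (H0 : F (fun u => In u l)) by (apply (Hmono _ _ HT); auto).
    clear Hl. induction l as [|a l IH].
    - exfalso. apply HF. apply (Hmono _ _ H0). simpl. auto.
    - destruct (Hcomp (fun u => u = a)) as [H|H].
      + eauto.
      + apply IH. apply (Hmono _ _ (Hint _ _ H0 H)).
        simpl. intros u [[->|Hu] Hne]; [contradiction|exact Hu]. }
  destruct Hx as [x Hx]. exists x. intros X. split.
  - intros HX. apply NNPP. intros Hn. apply HF.
    apply (Hmono _ _ (Hint _ _ HX Hx)). intros u [Hu ->]. contradiction.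
  - intros HX. apply (Hmono _ _ Hx). intros u ->. exact HX.
Qed.

Theorem proposition47 (U : Type) (HU : inhabited U) (B : U -> U -> U -> Prop) :
  (forall U1 U2 U3 : (U -> Prop) -> Prop,
      ultrafilter U1 -> ultrafilter U2 -> ultrafilter U3 ->
      is_principal U1 -> is_principal U2 -> is_principal U3 ->
      Qrel (diaB B) U1 U2 U3 -> Srel (boxB B) U1 U2 U3) /\
  (finite_type U ->
   forall U1 U2 U3 : (U -> Prop) -> Prop,
      ultrafilter U1 -> ultrafilter U2 -> ultrafilter U3 ->
      (Qrel (diaB B) U1 U2 U3 <-> Srel (boxB B) U1 U2 U3)).
Proof.
  split.
  - intros U1 U2 U3 _ _ _ P1 P2 P3. apply (princ_equiv U B U1 U2 U3 P1 P2 P3).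
  - intros Hf U1 U2 U3 H1 H2 H3.
    apply princ_equiv; apply fin_principal; assumption.
Qed.
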